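(* Let $G$ be a finite simple graph, let $\alpha=\alpha(G)$, for $1\le j\le\alpha$ let $g_j$ be the number of independent sets of $G$ of cardinality $j$, and let $g=\sum_{j=1}^{\alpha}(-1)^{j-1}g_j$. Then $\deg h_{R/I(G)}(t)=\alpha(G)$ if and only if $g\neq 1$.
   Context: An independent set of $G$ is a set of vertices no two of which are adjacent; $\alpha(G)$ is the maximum size of an independent set. For $G$ on vertices $x_1,\dots,x_n$, $R=k[x_1,\dots,x_n]$ over a field $k$, $I(G)=(x_ix_j:\{x_i,x_j\}\in E(G))$, and $h_{R/I(G)}(t)$ is the numerator of the Hilbert series $\sum_i\dim_k(R/I(G))_it^i$ written as a reduced fraction $h_{R/I(G)}(t)/(1-t)^{\dim R/I(G)}$. *)

(* Defs.v *)
From HB Require Import structures.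
From mathcomp Require Import all_boot all_order all_algebra.
From mathcomp Require Import mpoly.
Set Implicit Arguments. Unset Strict Implicit. Unset Printing Implicit Defensive.
Import Order.TTheory GRing.Theory Num.Theory.
Local Open Scope ring_scope.

(* A finite simple graph on the vertex set 'I_n (vertex i <-> variable x_i):
   an irreflexive symmetric adjacency relation. *)
Definition simple_graph (n : nat) (e : rel 'I_n) : Prop :=
  irreflexive e /\ (forall x y : 'I_n, e x y = e y x).

Definition independent (n : nat) (e : rel 'I_n) (A : {set 'I_n}) : bool :=
  [forall x in A, forall y in A, ~~ e x y].

Definition alpha (n : nat) (e : rel 'I_n) : nat :=
  (\max_(A : {set 'I_n} | independent e A) #|A|)%N.

Definition indep_count (n : nat) (e : rel 'I_n) (j : nat) : nat :=
  #|[set A : {set 'I_n} | independent e A & #|A| == j]|.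

Definition gsum (n : nat) (e : rel 'I_n) : int :=
  \sum_(1 <= j < (alpha e).+1) (-1) ^+ (j.-1) * (indep_count e j)%:Z.

Definition in_edge_ideal (k : fieldType) (n : nat) (e : rel 'I_n)
    (p : {mpoly k[n]}) : Prop :=
  exists q : 'I_n -> 'I_n -> {mpoly k[n]},
    p = \sum_(u : 'I_n) \sum_(v : 'I_n | e u v) q u v * ('X_u * 'X_v).

(* standard grading: p lies in R_i (homogeneous of degree i w.r.t. mdeg;
   0 counts as homogeneous of every degree) *)
Definition homog_of_deg (k : fieldType) (n : nat) (i : nat)
    (p : {mpoly k[n]}) : bool :=
  p \is @ishomog1 n k i mdeg.

(* dim_k (R/I(G))_i = m : since I(G) is homogeneous, (R/I)_i = R_i/(I cap R_i),
   and its dimension is m iff there are m elements of R_i linearly independent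
   modulo I(G) and any m+1 elements of R_i are linearly dependent modulo I(G). *)
Definition hilbert_fn_is (k : fieldType) (n : nat) (e : rel 'I_n)
    (i m : nat) : Prop :=
  (exists ps : 'I_m -> {mpoly k[n]},
     (forall j, homog_of_deg i (ps j)) /\
     (forall c : 'I_m -> k,
        in_edge_ideal e (\sum_j c j *: ps j) -> forall j, c j = 0))
  /\
  (forall ps : 'I_m.+1 -> {mpoly k[n]},
     (forall j, homog_of_deg i (ps j)) ->
     exists c : 'I_m.+1 -> k,
       in_edge_ideal e (\sum_j c j *: ps j) /\ exists j, c j != 0).

(* The Hilbert series sum_i H(i) t^i equals h(t)/(1-t)^d (as formal power
   series), i.e. h(t) = (1-t)^d * sum_i H(i) t^i coefficientwise,
   and the fraction is reduced: h coprime to (1-t)^d. *)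
Definition hilbert_numerator (k : fieldType) (n : nat) (e : rel 'I_n)
    (h : {poly rat}) (d : nat) : Prop :=
  exists H : nat -> nat,
    (forall i, hilbert_fn_is k e i (H i)) /\
    (forall i : nat,
       h`_i = \sum_(j < i.+1) ((1 - 'X) ^+ d : {poly rat})`_j * (H (i - j)%N)%:R) /\
    coprimep h ((1 - 'X) ^+ d).

(* Main.v *)
Require Import Defs.
From HB Require Import structures.
From mathcomp Require Import all_boot all_order all_algebra.
From mathcomp Require Import mpoly.
From mathcomp Require Import zify.
Import Order.TTheory GRing.Theory Num.Theory.
Local Open Scope ring_scope.

Definition eqmod (N : nat) (p q : {poly rat}) := forall i, (i < N)%N -> p`_i = q`_i.

Lemma eqmodMl N r p q : eqmod N p q -> eqmod N (r * p) (r * q).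
Proof.
move=> H i iN; rewrite !coefM; apply: eq_bigr => j _; rewrite H //.
exact: leq_ltn_trans (leq_subr _ _) iN.
Qed.

Lemma eqmod_trans N p q r : eqmod N p q -> eqmod N q r -> eqmod N p r.
Proof. by move=> H1 H2 i iN; rewrite H1 // H2. Qed.

Lemma eqmod_sym N p q : eqmod N p q -> eqmod N q p.
Proof. by move=> H i iN; rewrite H. Qed.

Lemma eqmodM N p q r s : eqmod N p q -> eqmod N r s -> eqmod N (p * r) (q * s).
Proof.
move=> H1 H2; apply: (@eqmod_trans _ _ (p * s)); first exact: eqmodMl.
rewrite mulrC [q * s]mulrC; exact: eqmodMl.
Qed.

Lemma eqmodX N p q s : eqmod N p q -> eqmod N (p ^+ s) (q ^+ s).
Proof.
move=> H; elim: s => [|s IH]; first by rewrite !expr0.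
by rewrite !exprS; apply: eqmodM.
Qed.

Lemma eqmod_sum N (I : finType) (P : pred I) (F G : I -> {poly rat}) :
  (forall x, P x -> eqmod N (F x) (G x)) ->
  eqmod N (\sum_(x | P x) F x) (\sum_(x | P x) G x).
Proof.
move=> H i iN; rewrite !coef_sum; apply: eq_bigr => x Px; exact: H.
Qed.

Lemma eqmod_all p q : (forall N, eqmod N p q) -> p = q.
Proof. by move=> H; apply/polyP => i; apply: (H i.+1). Qed.

Lemma eqmod_le N M p q : (N <= M)%N -> eqmod M p q -> eqmod N p q.
Proof. by move=> NM H i iN; apply: H; exact: leq_trans iN NM. Qed.

Definition W (N : nat) : {poly rat} := \poly_(j < N) ((0 < j)%N%:R).

Lemma coefW N i : (W N)`_i = ((0 < i) && (i < N))%N%:R.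
Proof. by rewrite coef_poly; case: (i < N)%N; rewrite ?andbT ?andbF. Qed.

Lemma eqmodW N M : (N <= M)%N -> eqmod N (W N) (W M).
Proof.
move=> NM i iN; rewrite !coefW iN (leq_trans iN NM) //.
Qed.

Lemma eqmod1XW N : eqmod N ((1 - 'X) * W N) 'X.
Proof.
move=> i iN; rewrite mulrBl mul1r coefB coefXM coefX coefW.
case: i iN => [|i] iN /=; first by rewrite subr0.
rewrite iN coefW (ltnW iN) andbT; case: i iN => [|i] iN /=; by rewrite ?subr0 ?subrr.
Qed.

Lemma omX k : (1 - 'X : {poly rat}) ^+ k = ((-1) ^+ k)%:P * ('X - 1%:P) ^+ k.
Proof.
have -> : (1 - 'X : {poly rat}) = (-1) * ('X - 1%:P) by rewrite mulN1r opprB polyC1.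
rewrite exprMn; congr (_ * _); by rewrite rmorphXn /= rmorphN1.
Qed.

Lemma size_omX k : size ((1 - 'X : {poly rat}) ^+ k) = k.+1.
Proof.
rewrite omX size_Cmul ?size_exp_XsubC //.
by rewrite expf_eq0 oppr_eq0 oner_eq0 andbF.
Qed.

Lemma coef_omX k : ((1 - 'X : {poly rat}) ^+ k)`_k = (-1) ^+ k.
Proof.
rewrite omX coefCM.
have : lead_coef (('X - (1 : rat)%:P) ^+ k) = 1.
  by apply/monicP; apply: monic_exp; apply: monicXsubC.
by rewrite lead_coefE size_exp_XsubC /= => ->; rewrite mulr1.
Qed.

Section Graph.
Context {n : nat} (e : rel 'I_n).

Lemma indep0 : independent e set0.
Proof. by apply/forallP => x; rewrite inE. Qed.

Lemma indep_le F : independent e F -> (#|F| <= alpha e)%N.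
Proof. by move=> H; rewrite /alpha; apply: leq_bigmax_cond. Qed.

Lemma alpha_att : exists2 F, independent e F & #|F| = alpha e.
Proof.
have : (0 < #|[pred A : {set 'I_n} | independent e A]|)%N.
  by apply/card_gt0P; exists set0; rewrite inE indep0.
move=> /(eq_bigmax_cond (fun A : {set 'I_n} => #|A|)) [F0 HF0 HF].
exists F0; first by move: HF0; rewrite inE.
by rewrite /alpha -HF.
Qed.

Definition Pp (N : nat) : {poly rat} :=
  \sum_(F : {set 'I_n} | independent e F) W N ^+ #|F|.

Definition Qp : {poly rat} :=
  \sum_(F : {set 'I_n} | independent e F) 'X^#|F| * (1 - 'X) ^+ (alpha e - #|F|).

Lemma eqmodP N M : (N <= M)%N -> eqmod N (Pp N) (Pp M).
Proof.
move=> NM; apply: eqmod_sum => F _; apply: eqmodX; exact: eqmodW.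
Qed.

Lemma eqmodPQ N : eqmod N ((1 - 'X) ^+ alpha e * Pp N) Qp.
Proof.
rewrite /Pp mulr_sumr; apply: eqmod_sum => F HF.
rewrite -(subnK (@indep_le F HF)) exprD -mulrA -exprMn subnK ?(@indep_le F HF) // mulrC.
apply: eqmodM; [apply: eqmodX; exact: eqmod1XW | by []].
Qed.

Lemma Qp1 : 0 < Qp.[1].
Proof.
rewrite /Qp horner_sum.
have [F0 H0 H0a] := alpha_att.
rewrite (bigD1 F0) //= hornerM hornerXn expr1n mul1r horner_exp !hornerE.
rewrite H0a subnn expr0 ltr_pwDl // sumr_ge0 // => F _.
rewrite hornerM hornerXn expr1n mul1r horner_exp !hornerE subrr expr0n.
by rewrite ler0n.
Qed.

Lemma Qp_neq0 : Qp != 0.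
Proof. by apply/eqP => H; move: Qp1; rewrite H horner0 ltxx. Qed.

Lemma size_Qp : (size Qp <= (alpha e).+1)%N.
Proof.
apply/leq_sizeP => j hj; rewrite coef_sum big1 // => F HF.
rewrite coefXnM; case: ifP => // _.
apply/leq_sizeP; last by apply: leqnn.
rewrite size_omX; have := @indep_le F HF; lia.
Qed.

Lemma sign_sub a b : (b <= a)%N -> ((-1) ^+ (a - b) : rat) = (-1) ^+ a * (-1) ^+ b.
Proof.
move=> ba; have h : ((-1) ^+ b * (-1) ^+ b : rat) = 1.
  by rewrite -exprMn mulrNN mulr1 expr1n.
by rewrite -{2}(subnK ba) exprD -mulrA h mulr1.
Qed.

Lemma coef_Qp_alpha :
  Qp`_(alpha e) = (-1) ^+ (alpha e) * \sum_(F | independent e F) (-1) ^+ #|F|.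
Proof.
rewrite /Qp coef_sum mulr_sumr; apply: eq_bigr => F HF.
have hF := @indep_le F HF.
rewrite coefXnM ltnNge hF /= coef_omX sign_sub //.
Qed.

Lemma indep_count0 : indep_count e 0 = 1%N.
Proof.
rewrite /indep_count (_ : [set A | _] = [set set0]) ?cards1 //.
apply/setP => A; rewrite !inE cards_eq0.
by case: eqP => [->|]; rewrite ?indep0 ?andbF.
Qed.

Lemma sum_sign1 :
  \sum_(F | independent e F) ((-1) ^+ #|F| : rat) =
  \sum_(j < (alpha e).+1) (-1) ^+ j * (indep_count e j)%:R.
Proof.
rewrite (partition_big (fun F : {set 'I_n} => (inord #|F| : 'I_(alpha e).+1)) predT) //=.
apply: eq_bigr => j _.
rewrite /indep_count -sum1_card natr_sum mulr_sumr.
apply: eq_big => F.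
  rewrite inE; case HF: (independent e F) => //=.
  by rewrite -val_eqE /= inordK // ltnS indep_le.
by move=> /andP [HF /eqP <-]; rewrite inordK ?mulr1 // ltnS indep_le.
Qed.

Lemma sum_sign :
  \sum_(F | independent e F) ((-1) ^+ #|F| : rat) = 1 - (gsum e)%:~R.
Proof.
rewrite sum_sign1 big_ord_recl /= expr0 mul1r indep_count0.
congr (_ + _); rewrite /gsum rmorph_sum /= big_add1 /= big_mkord -sumrN.
apply: eq_bigr => j _.
rewrite rmorphM /= rmorphXn /= rmorphN1 /= exprS mulN1r mulNr.
by [].
Qed.

Definition supp B (f : {ffun 'I_n -> 'I_B}) : {set 'I_n} := [set v | (f v : nat) != 0%N].
Arguments supp {B} f.

Definition Sset i := [set f : {ffun 'I_n -> 'I_i.+1} |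
  ((\sum_v (f v : nat))%N == i) && independent e (supp f)].

Lemma factor B v (F : {set 'I_n}) :
  \sum_(j : 'I_B.+1) (if ((j : nat) != 0%N) == (v \in F) then 'X^j else 0 : {poly rat})
  = if v \in F then W B.+1 else 1.
Proof.
case: (v \in F).
  rewrite /W poly_def; apply: eq_bigr => j _.
  by rewrite lt0n; case: (j : nat) => [|k] /=; rewrite ?scale0r ?scale1r.
rewrite big_ord_recl /= expr0 big1 ?addr0 //.
Qed.

Lemma gen_supp B (F : {set 'I_n}) :
  \sum_(f : {ffun 'I_n -> 'I_B.+1} | supp f == F) 'X^(\sum_v (f v : nat))
  = W B.+1 ^+ #|F|.
Proof.
rewrite -prodr_const (big_mkcond (fun v => v \in F)).
rewrite (eq_bigr (fun v => \sum_(j : 'I_B.+1)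
   (if ((j : nat) != 0%N) == (v \in F) then 'X^j else 0 : {poly rat}))); last first.
  by move=> v _; rewrite factor.
rewrite bigA_distr_bigA big_mkcond.
apply: eq_bigr => f _.
case: (boolP [forall v, ((f v : nat) != 0%N) == (v \in F)]) => H.
  have -> : supp f == F.
    by apply/eqP/setP => v; rewrite inE; exact: (eqP (forallP H v)).
  rewrite -prodrXr; apply eq_bigr; move=> v _.
  by rewrite (eqP (forallP H v)) eqxx.
have -> : supp f == F = false.
  apply/negP => /eqP Hs; move/negP: H; apply; apply/forallP => v.
  by rewrite -Hs inE.
move: H; rewrite negb_forall => /existsP [v Hv].
by rewrite (bigD1 v) //= (negbTE Hv) mul0r.
Qed.

Lemma gen B :
  \sum_(f : {ffun 'I_n -> 'I_B.+1} | independent e (supp f)) 'X^(\sum_v (f v : nat))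
  = Pp B.+1.
Proof.
rewrite (partition_big (@supp B.+1) (independent e)) //=.
apply: eq_bigr => F HF; rewrite -gen_supp; apply: eq_bigl => f.
by case: eqP => [->|]; rewrite ?HF ?andbF.
Qed.

Lemma card_S i : (#|Sset i|%:R : rat) = (Pp i.+1)`_i.
Proof.
rewrite -gen coef_sum -sum1_card natr_sum big_mkcond /= [RHS]big_mkcond /=.
apply: eq_bigr => f _; rewrite inE coefXn eq_sym.
by case: (independent e (supp f)); rewrite ?andbT ?andbF //; case: eqP.
Qed.

Definition mon B (f : {ffun 'I_n -> 'I_B}) : 'X_{1..n} := [multinom (f v : nat) | v < n].
Arguments mon {B} f.

Definition stdm (m : 'X_{1..n}) :=
  [forall u, forall v, e u v ==> (m u == 0%N) || (m v == 0%N)].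

Lemma mdeg_mon B (f : {ffun 'I_n -> 'I_B}) : mdeg (mon f) = (\sum_v (f v : nat))%N.
Proof. by rewrite mdegE; apply: eq_bigr => v _; rewrite mnmE. Qed.

Lemma stdm_mon B (f : {ffun 'I_n -> 'I_B}) : stdm (mon f) = independent e (supp f).
Proof.
apply/forallP/forallP => H u.
  apply/implyP; rewrite inE => Hu; apply/forallP => v; apply/implyP; rewrite inE => Hv.
  apply/negP => euv; move: (forallP (H u) v); rewrite euv !mnmE /=.
  by rewrite (negbTE Hu) (negbTE Hv).
apply/forallP => v; apply/implyP => euv; rewrite !mnmE.
case: (boolP ((f u : nat) == 0%N)) => //= Hu.
case: (boolP ((f v : nat) == 0%N)) => //= Hv.
move: (H u); rewrite inE Hu /= => /forallP /(_ v); rewrite inE Hv euv.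
by [].
Qed.

Lemma mon_inj B : injective (@mon B).
Proof.
move=> f g /mnmP H; apply/ffunP => v; apply/val_inj; move: (H v); by rewrite !mnmE.
Qed.

Lemma mle_mdeg (m : 'X_{1..n}) v : (m v <= mdeg m)%N.
Proof. by rewrite mdegE (bigD1 v) //= leq_addr. Qed.

Section Alg.
Variable k : fieldType.

Lemma A1 (p : {mpoly k[n]}) m : in_edge_ideal e p -> stdm m -> p@_m = 0.
Proof.
move=> [q ->] Hs; rewrite raddf_sum big1 // => u _.
rewrite raddf_sum big1 // => v euv.
rewrite -mpolyXD; apply/eqP; rewrite mcoeff_eq0; apply/negP => Hm.
have := perm_mem (msuppMX (q u v) (U_(u) + U_(v))%MM) m.
rewrite Hm => /esym/mapP [m' _ Hmm].
move/forallP: Hs => /(_ u) /forallP /(_ v); rewrite euv /= Hmm !mnmDE !mnm1E !eqxx /=.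
by rewrite !addn_eq0 /= andbF.
Qed.

Lemma ideal0 : in_edge_ideal e (0 : {mpoly k[n]}).
Proof.
exists (fun _ _ => 0); rewrite big1 // => u _; rewrite big1 // => v _; by rewrite mul0r.
Qed.

Lemma idealD (p q : {mpoly k[n]}) :
  in_edge_ideal e p -> in_edge_ideal e q -> in_edge_ideal e (p + q).
Proof.
move=> [qp ->] [qq ->]; exists (fun a b => qp a b + qq a b).
rewrite -big_split; apply eq_bigr; move=> a _; rewrite -big_split; apply eq_bigr; move=> b _.
by rewrite mulrDl.
Qed.

Lemma ideal_gen u v (r : {mpoly k[n]}) : e u v -> in_edge_ideal e (r * ('X_u * 'X_v)).
Proof.
move=> euv; exists (fun a b => if (a == u) && (b == v) then r else 0).
rewrite (bigD1 u) //= (bigD1 v) //= !eqxx /=.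
rewrite big1 ?addr0; last first.
  by move=> b /andP [_ bv]; rewrite (negbTE bv) mul0r.
rewrite [X in _ = _ + X]big1 ?addr0 // => a au; apply big1; move=> b _.
by rewrite (negbTE au) mul0r.
Qed.

Lemma A2 (irr : irreflexive e) (p : {mpoly k[n]}) :
  (forall m, stdm m -> p@_m = 0) -> in_edge_ideal e p.
Proof.
move=> H; rewrite (mpolyE p) big_seq; apply: big_ind.
- exact: ideal0.
- exact: idealD.
move=> m Hm.
have Hns : ~~ stdm m.
  by apply/negP => Hs; move: Hm; rewrite mcoeff_msupp (H _ Hs) eqxx.
move: Hns; rewrite negb_forall => /existsP [u]; rewrite negb_forall => /existsP [v].
rewrite negb_imply negb_or => /andP [euv /andP [mu mv]].
have uv : u != v by apply/eqP => E; move: euv; rewrite E irr.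
have le : (U_(u) + U_(v) <= m)%MM.
  apply/mnm_lepP => i; rewrite mnmDE !mnm1E.
  have [Eu|Eu] := eqVneq u i; have [Ev|Ev] := eqVneq v i => /=.
  - by move: uv; rewrite Eu Ev eqxx.
  - by rewrite addn0 -Eu lt0n.
  - by rewrite -Ev lt0n.
  - by [].
have -> : 'X_[m] = 'X_[m - (U_(u) + U_(v))] * ('X_u * 'X_v) :> {mpoly k[n]}.
  by rewrite -!mpolyXD submK.
by rewrite scalerAl; apply: ideal_gen.
Qed.



Lemma fam_homog i M (HM : (M <= #|Sset i|)%N) (j : 'I_M) :
  homog_of_deg i ('X_[mon (enum_val (widen_ord HM j))] : {mpoly k[n]}).
Proof.
rewrite /homog_of_deg dhomogX /= mdeg_mon.
by have := enum_valP (widen_ord HM j); rewrite inE => /andP [-> _].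
Qed.

Lemma fam_indep i M (HM : (M <= #|Sset i|)%N) (c : 'I_M -> k) :
  in_edge_ideal e (\sum_j c j *: ('X_[mon (enum_val (widen_ord HM j))] : {mpoly k[n]})) ->
  forall j, c j = 0.
Proof.
move=> Hid j.
have Hs : stdm (mon (enum_val (widen_ord HM j))).
  by rewrite stdm_mon; have := enum_valP (widen_ord HM j); rewrite inE => /andP [_ ->].
have := A1 _ _ Hid Hs.
rewrite raddf_sum (bigD1 j) //= mcoeffZ mcoeffX eqxx mulr1 big1 ?addr0 // => j' nj.
rewrite mcoeffZ mcoeffX.
case: eqP => [/mon_inj/enum_val_inj/(congr1 val) /= /val_inj E|_]; last by rewrite mulr0.
by move: nj; rewrite E eqxx.
Qed.

Lemma fam_dep (irr : irreflexive e) i M (HM : (#|Sset i| < M)%N)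
  (ps : 'I_M -> {mpoly k[n]}) : (forall j, homog_of_deg i (ps j)) ->
  exists c : 'I_M -> k, in_edge_ideal e (\sum_j c j *: ps j) /\ exists j, c j != 0.
Proof.
move=> Hh.
pose A : 'M[k]_(M, #|Sset i|) := \matrix_(j < M, l < #|Sset i|) (ps j)@_(mon (enum_val l)).
have : kermx A != 0.
  rewrite kermx_eq0 /row_free; apply/negP => /eqP E.
  by have := rank_leq_col A; rewrite E leqNgt HM.
move/matrix0Pn => [r [l0 Hl0]].
exists (fun j => kermx A r j); split; last by exists l0.
apply: A2 => // m Hm.
rewrite raddf_sum /=.
have [Hd|Hd] := eqVneq (mdeg m) i; last first.
  rewrite big1 // => j _; rewrite mcoeffZ.
  by rewrite (dhomog_nemf_coeff (Hh j) Hd) mulr0.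
pose f : {ffun 'I_n -> 'I_i.+1} := [ffun v => inord (m v)].
have mf : mon f = m.
  apply/mnmP => v; rewrite mnmE ffunE inordK // ltnS -Hd; exact: mle_mdeg.
have fS : f \in Sset i.
  by rewrite inE -mdeg_mon mf Hd eqxx -stdm_mon mf Hm.
have E : (kermx A *m A) r (enum_rank_in fS f) = 0 by rewrite mulmx_ker mxE.
rewrite mxE in E; rewrite -[RHS]E; apply: eq_bigr => j _.
rewrite mcoeffZ; congr (_ * _); by rewrite /A mxE enum_rankK_in // mf.
Qed.

Lemma Hfn (irr : irreflexive e) i m : hilbert_fn_is k e i m -> m = #|Sset i|.
Proof.
move=> [[ps [Hh Hind]] Hdep].
have [lt|ge] := ltnP #|Sset i| m.
  have [c [Hc [j Hj]]] := @fam_dep irr i m lt ps Hh.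
  by move: Hj; rewrite (Hind c Hc j) eqxx.
move: ge; rewrite leq_eqVlt => /orP [/eqP //|lt].
have [c [Hc [j Hj]]] := Hdep _ (@fam_homog i m.+1 lt).
by move: Hj; rewrite (@fam_indep i m.+1 lt c Hc j) eqxx.
Qed.

End Alg.
End Graph.

Theorem theorem3p2 (k : fieldType) (n : nat) (e : rel 'I_n)
    (h : {poly rat}) (d : nat) :
  simple_graph e ->
  hilbert_numerator k e h d ->
  ((size h).-1 = alpha e <-> gsum e != 1).
Proof.
move=> [irr _] [H [HH [Hh Hcop]]].
have HS : forall i, H i = #|Sset e i| := fun i => @Hfn _ e k irr _ _ (HH i).
have Hmod : forall N, eqmod N ((1 - 'X) ^+ d * Pp e N) h.
  move=> N i iN; rewrite Hh coefM; apply: eq_bigr => j _.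
  rewrite HS card_S; congr (_ * _).
  symmetry; apply: (@eqmodP _ e (i - j).+1 N) => //.
  by apply: leq_trans iN; rewrite ltnS leq_subr.
have hQ : h = Qp e.
  case: (leqP (alpha e) d) => Had.
    have hQ : h = (1 - 'X) ^+ (d - alpha e) * Qp e.
      apply: eqmod_all => N; apply: (@eqmod_trans N h ((1 - 'X) ^+ d * Pp e N)); first exact: eqmod_sym (Hmod N).
      rewrite -{1}(subnK Had) exprD -mulrA; apply: eqmodMl; exact: eqmodPQ.
    case E: (d - alpha e)%N hQ => [|t] hQ; first by rewrite hQ expr0 mul1r.
    have d0 : (0 < d)%N by lia.
    have := coprimepP _ _ Hcop (1 - 'X).
    rewrite hQ exprS -mulrA dvdp_mulr ?dvdpp //.
    rewrite dvdp_exp ?dvdpp // => /(_ isT isT) /eqp_size.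
    by rewrite size_poly1 -(expr1 (1 - 'X)) size_omX.
  have : Qp e = (1 - 'X) ^+ (alpha e - d) * h.
    apply: eqmod_all => N; apply: (@eqmod_trans N (Qp e) ((1 - 'X) ^+ alpha e * Pp e N)); first exact: eqmod_sym (eqmodPQ e N).
    rewrite -{1}(subnK (ltnW Had)) exprD -mulrA; apply: eqmodMl; exact: Hmod.
  move/(congr1 (horner^~ 1)) => E; move: (Qp1 e); rewrite E.
  rewrite hornerM horner_exp !hornerE subrr expr0n.
  by rewrite (_ : (alpha e - d == 0)%N = false) ?mul0r ?ltxx //; apply/negbTE; rewrite subn_eq0 -ltnNge.
rewrite hQ.
have hs := size_Qp e; have nz := Qp_neq0 e.
have Ca := coef_Qp_alpha e; rewrite sum_sign in Ca.
split.
  move=> Hsz; apply/negP => /eqP g1.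
  have Hs : size (Qp e) = (alpha e).+1.
    by move: nz Hsz; rewrite -size_poly_eq0; case: (size (Qp e)) => //= s _ ->.
  have : lead_coef (Qp e) != 0 by rewrite lead_coef_eq0.
  by rewrite lead_coefE Hs /= Ca g1 subrr mulr0 eqxx.
move=> g1.
have Hne : (Qp e)`_(alpha e) != 0.
  rewrite Ca mulf_neq0 ?signr_eq0 // subr_eq0.
  by apply/negP => /eqP E; move: g1; rewrite -(eqr_int rat) -E eqxx.
have : ((alpha e).+1 <= size (Qp e))%N.
  rewrite ltnNge; apply/negP => /leq_sizeP /(_ (alpha e) (leqnn _)) E.
  by move: Hne; rewrite E eqxx.
move=> H1; have -> : size (Qp e) = (alpha e).+1 by apply/eqP; rewrite eqn_leq hs H1.
by [].
Qed.
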